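(* There exists an online ranking game for NDCG with top-1 feedback (binary relevance, some fixed number of objects $m$) such that for every online learning algorithm there is an adversary strategy generating $r_1,\dots,r_T\in\{0,1\}^m$ with $$\max_\sigma\sum_{t=1}^T NDCG(\sigma,r_t)-\mathbb{E}\Big[\sum_{t=1}^T NDCG(\sigma_t,r_t)\Big]=\Omega(T).$$ The same lower bound holds with NDCG replaced by MAP or by AUC (for AUC, a loss, the regret is $\mathbb{E}\sum_t AUC(\sigma_t,r_t)-\min_\sigma\sum_t AUC(\sigma,r_t)$).
   Context: Objects are $\{1,\dots,m\}$; a ranking is a permutation $\sigma$ of $[m]$ with $\sigma(i)$ the rank of object $i$ and $\sigma^{-1}(j)$ the object at rank $j$. $NDCG(\sigma,r)=\frac{1}{Z(r)}\sum_{i=1}^m\frac{r(i)}{\log_2(1+\sigma(i))}$ with $Z(r)=\max_\sigma\sum_i\frac{r(i)}{\log_2(1+\sigma(i))}$; $MAP(\sigma,r)=\frac{1}{\|r\|_1}\sum_{i=1}^m\frac{\sum_{j\le i}\mathbb{1}(r(\sigma^{-1}(j))=1)}{i}\mathbb{1}(r(\sigma^{-1}(i))=1)$; $AUC(\sigma,r)=\frac{1}{N(r)}\sum_{i,j}\mathbb{1}(\sigma(i)<\sigma(j))\mathbb{1}(r(i)<r(j))$ with $N(r)=\|r\|_1(m-\|r\|_1)$. Game: an oblivious adversary fixes $r_1,\dots,r_T$ in advance; at round $t$ the learner (possibly randomized) outputs $\sigma_t$ and observes only $r_t(\sigma_t^{-1}(1))$, the relevance of the top-ranked object; the expectation is over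 the learner's randomization. *)

(* Defs.v *)
From HB Require Import structures.
From mathcomp Require Import all_boot all_order all_algebra all_fingroup.
From mathcomp Require Import all_classical all_reals exp.
Set Implicit Arguments. Unset Strict Implicit. Unset Printing Implicit Defensive.
Import Order.TTheory GRing.Theory Num.Theory.
Local Open Scope ring_scope.

(* Objects are 'I_m (object k of the paper is the ordinal k-1).
   A ranking is sigma : 'S_m; the paper's rank sigma(i) in {1..m} is
   (sigma i).+1 here, and sigma^{-1}(j) (object at rank j) is
   (sigma^-1)%g applied to the ordinal j-1.
   A binary relevance vector is r : 'I_m -> bool (true = relevant). *)

Section Metrics.
Variable R : realType.
Variable m : nat.

Definition log2 (x : R) : R := ln x / ln 2.

Definition DCG (s : 'S_m) (r : 'I_m -> bool) : R :=
  \sum_(i < m) (r i)%:R / log2 ((s i).+1.+1)%:R.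

(* Z(r) = max_sigma DCG(sigma, r)  (the fold starts from the value at the
   identity ranking, which is itself among the candidates) *)
Definition Zn (r : 'I_m -> bool) : R :=
  \big[Num.max/(DCG 1%g r)]_(s : 'S_m) DCG s r.

Definition NDCG (s : 'S_m) (r : 'I_m -> bool) : R := DCG s r / Zn r.

Definition norm1 (r : 'I_m -> bool) : nat := #|[set i | r i]|.

(* MAP(sigma,r) = 1/||r||_1 sum_i [sum_{j<=i} 1(r(sigma^-1 j)=1)]/i * 1(r(sigma^-1 i)=1),
   ranks i,j in {1..m} written as ordinals i,j in {0..m-1} (so i is (i:nat)+1). *)
Definition MAP (s : 'S_m) (r : 'I_m -> bool) : R :=
  (norm1 r)%:R^-1 *
  \sum_(i < m)
     ((\sum_(j < m | (j <= i)%N) (r ((s^-1)%g j))%:R) / (i.+1)%:R)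
     * (r ((s^-1)%g i))%:R.

Definition AUC (s : 'S_m) (r : 'I_m -> bool) : R :=
  ((norm1 r * (m - norm1 r))%N)%:R^-1 *
  \sum_(i < m) \sum_(j < m) ((s i < s j)%N && (r i < r j)%O)%:R.

(* Relevance of the top-ranked object, r(sigma^{-1}(1)): the unique
   object i with sigma(i) = 1 (i.e. ordinal rank 0). *)
Definition top_feedback (s : 'S_m) (r : 'I_m -> bool) : bool :=
  [exists i, ((s i : nat) == 0%N) && r i].

(* A deterministic strategy maps the round index t and the list of
   feedbacks observed in rounds 0..t-1 to a ranking. *)
Definition strategy := nat -> seq bool -> 'S_m.

Fixpoint history (st : strategy) (rs : nat -> 'I_m -> bool) (t : nat)
  : seq bool :=
  match t with
  | 0 => [::]
  | t'.+1 => let h := history st rs t' in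
             rcons h (top_feedback (st t' h) (rs t'))
  end.

(* ranking output at round t (rounds numbered 0..T-1) *)
Definition play (st : strategy) (rs : nat -> 'I_m -> bool) (t : nat) : 'S_m :=
  st t (history st rs t).

(* A randomized learner: a probability distribution p over a finite set
   Omega of internal random seeds, each seed determining a deterministic
   strategy. *)
Definition is_distr (Omega : finType) (p : Omega -> R) : Prop :=
  (forall w, 0 <= p w) /\ \sum_(w : Omega) p w = 1.

Definition expected_cum (f : 'S_m -> ('I_m -> bool) -> R) (T : nat)
  (Omega : finType) (p : Omega -> R) (st : Omega -> strategy)
  (rs : nat -> 'I_m -> bool) : R :=
  \sum_(w : Omega) p w * \sum_(t < T) f (play (st w) rs t) (rs t).

Definition best_cum (f : 'S_m -> ('I_m -> bool) -> R) (T : nat)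
  (rs : nat -> 'I_m -> bool) : R :=
  \big[Num.max/(\sum_(t < T) f 1%g (rs t))]_(s : 'S_m) \sum_(t < T) f s (rs t).

Definition min_cum (f : 'S_m -> ('I_m -> bool) -> R) (T : nat)
  (rs : nat -> 'I_m -> bool) : R :=
  \big[Num.min/(\sum_(t < T) f 1%g (rs t))]_(s : 'S_m) \sum_(t < T) f s (rs t).

End Metrics.

Definition gain_regret_Omega_T (R : realType)
  (f : forall m : nat, 'S_m -> ('I_m -> bool) -> R) : Prop :=
  exists m : nat, exists c : R, 0 < c /\ exists T0 : nat,
    forall T : nat, (T0 <= T)%N ->
    forall (Omega : finType) (p : Omega -> R) (st : Omega -> strategy m),
      is_distr p ->
      exists rs : nat -> 'I_m -> bool,
        c * T%:R <= best_cum (f m) T rs - expected_cum (f m) T p st rs.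

Definition loss_regret_Omega_T (R : realType)
  (f : forall m : nat, 'S_m -> ('I_m -> bool) -> R) : Prop :=
  exists m : nat, exists c : R, 0 < c /\ exists T0 : nat,
    forall T : nat, (T0 <= T)%N ->
    forall (Omega : finType) (p : Omega -> R) (st : Omega -> strategy m),
      is_distr p ->
      exists rs : nat -> 'I_m -> bool,
        c * T%:R <= expected_cum (f m) T p st rs
                    - min_cum (f m) T rs.

(* Main.v *)
Require Import Defs.
From HB Require Import structures.
From mathcomp Require Import all_boot all_order all_algebra all_fingroup.
From mathcomp Require Import all_classical all_reals exp.
From mathcomp Require Import ring lra.
Set Implicit Arguments. Unset Strict Implicit. Unset Printing Implicit Defensive.
Import Order.TTheory GRing.Theory Num.Theory.
Local Open Scope ring_scope.
Section Gen.
Variable R : realType.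

Definition scons (b : bool) (s : nat -> bool) : nat -> bool :=
  fun n => if n is n'.+1 then s n' else b.

Fixpoint E (n : nat) (F : (nat -> bool) -> R) : R :=
  match n with
  | 0 => F (fun _ => false)
  | n'.+1 => (E n' (fun s => F (scons true s)) + E n' (fun s => F (scons false s))) / 2
  end.

Lemma E_ext n F G : (forall s, F s = G s) -> E n F = E n G.
Proof.
elim: n F G => [|n IH] F G h /=; first exact: h.
by rewrite (IH _ (fun s => G (scons true s))) ?(IH (fun s => F (scons false s)) (fun s => G (scons false s))).
Qed.

Lemma E_const n c : E n (fun _ => c) = c.
Proof. elim: n => [|n IH] //=; rewrite IH; lra. Qed.

Lemma E_add n F G : E n (fun s => F s + G s) = E n F + E n G.
Proof.
elim: n F G => [|n IH] F G //=.
rewrite (IH (fun s => F (scons true s))) (IH (fun s => F (scons false s))); lra.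
Qed.

Lemma E_scale n c F : E n (fun s => c * F s) = c * E n F.
Proof.
elim: n F => [|n IH] F //=.
rewrite (IH (fun s => F (scons true s))) (IH (fun s => F (scons false s))).
by rewrite -mulrDr mulrA.
Qed.

Lemma E_sum n (I : finType) (G : I -> (nat -> bool) -> R) :
  E n (fun s => \sum_(i : I) G i s) = \sum_(i : I) E n (G i).
Proof.
elim: n G => [|n IH] G //=.
rewrite (IH (fun i s => G i (scons true s))) (IH (fun i s => G i (scons false s))).
by rewrite -big_split mulr_suml.
Qed.

Lemma E_mono n F G : (forall s, F s <= G s) -> E n F <= E n G.
Proof.
elim: n F G => [|n IH] F G h /=; first exact: h.
have h1 := IH (fun s => F (scons true s)) (fun s => G (scons true s)) (fun s => h _).
have h2 := IH (fun s => F (scons false s)) (fun s => G (scons false s)) (fun s => h _).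
lra.
Qed.

Lemma E_exists n F : exists s, E n F <= F s.
Proof.
elim: n F => [|n IH] F /=; first by exists (fun _ => false).
have [s1 h1] := IH (fun s => F (scons true s)).
have [s2 h2] := IH (fun s => F (scons false s)).
set A := E n _ in h1 *; set B := E n _ in h2 *.
case: (lerP B A) => hAB.
  by exists (scons true s1); lra.
by exists (scons false s2); lra.
Qed.

Variable m : nat.

Definition shift (st : strategy m) (b : bool) : strategy m :=
  fun t h => st t.+1 (b :: h).

Lemma historyS (st : strategy m) rs t :
  history st rs t.+1 =
  top_feedback (st 0%N [::]) (rs 0%N) ::
     history (shift st (top_feedback (st 0%N [::]) (rs 0%N))) (fun k => rs k.+1) t.
Proof.
elim: t => [|t IH] //.
change (history st rs t.+2) with
  (rcons (history st rs t.+1) (top_feedback (st t.+1 (history st rs t.+1)) (rs t.+1))).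
rewrite IH /=.
by [].
Qed.

Lemma playS (st : strategy m) rs t :
  play st rs t.+1 =
  play (shift st (top_feedback (st 0%N [::]) (rs 0%N))) (fun k => rs k.+1) t.
Proof. by rewrite /play historyS. Qed.


Lemma indep n t (st : strategy m) (a : bool -> 'I_m -> bool) (G : 'S_m -> bool -> R) :
  (t < n)%N ->
  E n (fun s => G (play st (fun k => a (s k)) t) (s t)) =
  E n (fun s => (G (play st (fun k => a (s k)) t) true
                 + G (play st (fun k => a (s k)) t) false) / 2).
Proof.
elim: n t st => [|n IH] [|t] st // ht.
  by rewrite /= /play /= !E_const; lra.
have e : forall b, E n (fun s => G (play st (fun k => a (scons b s k)) t.+1) (scons b s t.+1))
   = E n (fun s => G (play (shift st (top_feedback (st 0%N [::]) (a b))) (fun k => a (s k)) t) (s t)).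
  by move=> b; apply: E_ext => s; rewrite playS.
have e' : forall b, E n (fun s => (G (play st (fun k => a (scons b s k)) t.+1) true
                 + G (play st (fun k => a (scons b s k)) t.+1) false) / 2)
   = E n (fun s => (G (play (shift st (top_feedback (st 0%N [::]) (a b))) (fun k => a (s k)) t) true
                 + G (play (shift st (top_feedback (st 0%N [::]) (a b))) (fun k => a (s k)) t) false) / 2).
  by move=> b; apply: E_ext => s; rewrite playS.
rewrite /= e e' e e' !IH //.
Qed.

Lemma samedist n t (st : strategy m) (a1 a2 : bool -> 'I_m -> bool) (g : 'S_m -> R) :
  (forall (sg : 'S_m) (H : bool -> R),
     H (top_feedback sg (a1 true)) + H (top_feedback sg (a1 false)) =
     H (top_feedback sg (a2 true)) + H (top_feedback sg (a2 false))) ->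
  (t <= n)%N ->
  E n (fun s => g (play st (fun k => a1 (s k)) t)) =
  E n (fun s => g (play st (fun k => a2 (s k)) t)).
Proof.
move=> marg; elim: n t st => [|n IH] t st.
  by case: t.
case: t => [|t] ht; first by [].
have e : forall a b, E n (fun s => g (play st (fun k => a (scons b s k)) t.+1))
   = E n (fun s => g (play (shift st (top_feedback (st 0%N [::]) (a b))) (fun k => a (s k)) t)).
  by move=> a b; apply: E_ext => s; rewrite playS.
rewrite /= !e.
pose K b := E n (fun s => g (play (shift st b) (fun k => a2 (s k)) t)).
rewrite !(IH t (shift st _)) //.
by rewrite (marg (st 0%N [::]) K).
Qed.

End Gen.

Lemma E_sub (R : realType) n (F G : (nat -> bool) -> R) :
  E n (fun s => F s - G s) = E n F - E n G.
Proof.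
rewrite (E_ext _ (G := fun s => F s + (-1) * G s)); last by move=> s; rewrite mulN1r.
by rewrite E_add E_scale mulN1r.
Qed.

Section Reg.
Variables (R : realType) (m : nat) (f : 'S_m -> ('I_m -> bool) -> R).

Definition gk (a : bool -> 'I_m -> bool) (sg : 'S_m) := (f sg (a true) + f sg (a false)) / 2.

Lemma E_exp a n T (Omega : finType) (p : Omega -> R) st : (T <= n)%N ->
  E n (fun s => expected_cum f T p st (fun k => a (s k))) =
  \sum_w p w * \sum_(t < T) E n (fun s => gk a (play (st w) (fun k => a (s k)) t)).
Proof.
move=> hT; rewrite /expected_cum E_sum; apply: eq_bigr => w _.
rewrite E_scale E_sum; congr (_ * _); apply: eq_bigr => t _.
exact: (indep _ _ (fun sg b => f sg (a b)) (leq_trans (ltn_ord t) hT)).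
Qed.

Lemma E_fixed a n T sg : (T <= n)%N ->
  E n (fun s => \sum_(t < T) f sg (a (s t))) = T%:R * gk a sg.
Proof.
move=> hT; rewrite E_sum.
transitivity (\sum_(t < T) gk a sg).
  apply: eq_bigr => t _.
  have := indep (fun _ _ => 1%g) a (fun _ b => f sg (a b)) (leq_trans (ltn_ord t) hT).
  by rewrite /= E_const => ->.
by rewrite sumr_const card_ord mulr_natl.
Qed.

Lemma E_learner a1 a2 n T (Omega : finType) (p : Omega -> R) st M :
  (forall (sg : 'S_m) (H : bool -> R),
     H (top_feedback sg (a1 true)) + H (top_feedback sg (a1 false)) =
     H (top_feedback sg (a2 true)) + H (top_feedback sg (a2 false))) ->
  is_distr p -> (T <= n)%N ->
  (forall sg, gk a1 sg + gk a2 sg <= M) ->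
  E n (fun s => expected_cum f T p st (fun k => a1 (s k))) +
  E n (fun s => expected_cum f T p st (fun k => a2 (s k))) <= T%:R * M.
Proof.
move=> marg [p0 p1] hT hM.
rewrite !E_exp // -big_split /=.
apply: le_trans (_ : \sum_w p w * (T%:R * M) <= _); last first.
  by rewrite -mulr_suml p1 mul1r.
apply: ler_sum => w _; rewrite -mulrDr ler_wpM2l //.
rewrite -big_split /=.
apply: le_trans (_ : \sum_(t < T) M <= _); last by rewrite sumr_const card_ord mulr_natl.
apply: ler_sum => t _.
rewrite -(samedist (st w) (gk a2) marg (ltnW (leq_trans (ltn_ord t) hT))).
rewrite -E_add; apply: le_trans (_ : E n (fun _ => M) <= _); last by rewrite E_const.
by apply: E_mono => s; apply: hM.
Qed.

End Reg.

Lemma gain_generic (R : realType) m (f : 'S_m -> ('I_m -> bool) -> R) a1 a2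
  (s1 s2 : 'S_m) (M : R) :
  (forall (sg : 'S_m) (H : bool -> R),
     H (top_feedback sg (a1 true)) + H (top_feedback sg (a1 false)) =
     H (top_feedback sg (a2 true)) + H (top_feedback sg (a2 false))) ->
  (forall sg, gk f a1 sg + gk f a2 sg <= M) ->
  0 < gk f a1 s1 + gk f a2 s2 - M ->
  exists c : R, 0 < c /\ exists T0 : nat,
    forall T : nat, (T0 <= T)%N ->
    forall (Omega : finType) (p : Omega -> R) (st : Omega -> strategy m),
      is_distr p ->
      exists rs : nat -> 'I_m -> bool,
        c * T%:R <= best_cum f T rs - expected_cum f T p st rs.
Proof.
move=> marg hM hD; set D := _ - M in hD.
exists (D / 2); split; first lra.
exists 0%N => T _ Omega p st hp.
set F1 := fun s => best_cum f T (fun k => a1 (s k)) - expected_cum f T p st (fun k => a1 (s k)).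
set F2 := fun s => best_cum f T (fun k => a2 (s k)) - expected_cum f T p st (fun k => a2 (s k)).
have key : D * T%:R <= E T F1 + E T F2.
  rewrite /F1 /F2 !E_sub.
  have b1 : T%:R * gk f a1 s1 <= E T (fun s => best_cum f T (fun k => a1 (s k))).
    rewrite -(E_fixed f a1 s1 (leqnn T)); apply: E_mono => s; exact: le_bigmax.
  have b2 : T%:R * gk f a2 s2 <= E T (fun s => best_cum f T (fun k => a2 (s k))).
    rewrite -(E_fixed f a2 s2 (leqnn T)); apply: E_mono => s; exact: le_bigmax.
  have hl := @E_learner R m f a1 a2 T T Omega p st M marg hp (leqnn T) hM.
  have -> : D * T%:R = T%:R * gk f a1 s1 + T%:R * gk f a2 s2 - T%:R * M by rewrite /D; ring.
  lra.
have hT : 0 <= T%:R :> R by [].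
case: (lerP (D / 2 * T%:R) (E T F1)) => h1.
  have [s hs] := E_exists T F1.
  exists (fun k => a1 (s k)); exact: le_trans hs.
have [s hs] := E_exists T F2.
exists (fun k => a2 (s k)); apply: le_trans hs.
have e : D * T%:R = 2 * (D / 2 * T%:R) by field.
lra.
Qed.

Lemma E_learner_ge (R : realType) m (f : 'S_m -> ('I_m -> bool) -> R) a1 a2 n T
  (Omega : finType) (p : Omega -> R) st M :
  (forall (sg : 'S_m) (H : bool -> R),
     H (top_feedback sg (a1 true)) + H (top_feedback sg (a1 false)) =
     H (top_feedback sg (a2 true)) + H (top_feedback sg (a2 false))) ->
  is_distr p -> (T <= n)%N ->
  (forall sg, M <= gk f a1 sg + gk f a2 sg) ->
  T%:R * M <=
  E n (fun s => expected_cum f T p st (fun k => a1 (s k))) +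
  E n (fun s => expected_cum f T p st (fun k => a2 (s k))).
Proof.
move=> marg [p0 p1] hT hM.
rewrite !E_exp // -big_split /=.
apply: le_trans (_ : T%:R * M <= \sum_w p w * (T%:R * M)) _.
  by rewrite -mulr_suml p1 mul1r.
apply: ler_sum => w _; rewrite -mulrDr ler_wpM2l //.
rewrite -big_split /=.
apply: le_trans (_ : T%:R * M <= \sum_(t < T) M) _; first by rewrite sumr_const card_ord mulr_natl.
apply: ler_sum => t _.
rewrite -(samedist (st w) (gk f a2) marg (ltnW (leq_trans (ltn_ord t) hT))).
rewrite -E_add; apply: le_trans (_ : M <= E n (fun _ => M)) _; first by rewrite E_const.
by apply: E_mono => s; apply: hM.
Qed.

Lemma loss_generic (R : realType) m (f : 'S_m -> ('I_m -> bool) -> R) a1 a2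
  (s1 s2 : 'S_m) (M : R) :
  (forall (sg : 'S_m) (H : bool -> R),
     H (top_feedback sg (a1 true)) + H (top_feedback sg (a1 false)) =
     H (top_feedback sg (a2 true)) + H (top_feedback sg (a2 false))) ->
  (forall sg, M <= gk f a1 sg + gk f a2 sg) ->
  0 < M - gk f a1 s1 - gk f a2 s2 ->
  exists c : R, 0 < c /\ exists T0 : nat,
    forall T : nat, (T0 <= T)%N ->
    forall (Omega : finType) (p : Omega -> R) (st : Omega -> strategy m),
      is_distr p ->
      exists rs : nat -> 'I_m -> bool,
        c * T%:R <= expected_cum f T p st rs - min_cum f T rs.
Proof.
move=> marg hM hD; set D := M - _ - _ in hD.
exists (D / 2); split; first lra.
exists 0%N => T _ Omega p st hp.
set F1 := fun s => expected_cum f T p st (fun k => a1 (s k)) - min_cum f T (fun k => a1 (s k)).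
set F2 := fun s => expected_cum f T p st (fun k => a2 (s k)) - min_cum f T (fun k => a2 (s k)).
have key : D * T%:R <= E T F1 + E T F2.
  rewrite /F1 /F2 !E_sub.
  have b1 : E T (fun s => min_cum f T (fun k => a1 (s k))) <= T%:R * gk f a1 s1.
    rewrite -(E_fixed f a1 s1 (leqnn T)); apply: E_mono => s; exact: bigmin_le.
  have b2 : E T (fun s => min_cum f T (fun k => a2 (s k))) <= T%:R * gk f a2 s2.
    rewrite -(E_fixed f a2 s2 (leqnn T)); apply: E_mono => s; exact: bigmin_le.
  have hl := @E_learner_ge R m f a1 a2 T T Omega p st M marg hp (leqnn T) hM.
  have -> : D * T%:R = T%:R * M - T%:R * gk f a1 s1 - T%:R * gk f a2 s2 by rewrite /D; ring.
  lra.
case: (lerP (D / 2 * T%:R) (E T F1)) => h1.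
  have [s hs] := E_exists T F1.
  exists (fun k => a1 (s k)); exact: le_trans hs.
have [s hs] := E_exists T F2.
exists (fun k => a2 (s k)); apply: le_trans hs.
have e : D * T%:R = 2 * (D / 2 * T%:R) by field.
lra.
Qed.

Section Conc.
Variable R : realType.

Lemma ln2_gt0 : 0 < ln (2%:R : R).
Proof. by apply: ln_gt0; rewrite ltr1n. Qed.

Lemma l2 : log2 (2%:R : R) = 1.
Proof. by rewrite /log2 divff // gt_eqF // ln2_gt0. Qed.

Lemma l4 : log2 (4%:R : R) = 2.
Proof.
rewrite /log2 (_ : 4%:R = 2%:R * 2%:R :> R); last by rewrite -natrM.
rewrite lnM ?posrE ?ltr0n //.
have h := ln2_gt0; field; lra.
Qed.

Lemma l3 : 1 < log2 (3%:R : R) < 2.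
Proof.
have h := ln2_gt0.
have a : ln (2%:R : R) < ln 3%:R by rewrite ltr_ln ?posrE ?ltr0n // ltr_nat.
have b : ln (3%:R : R) < ln (2%:R * 2%:R).
  by rewrite ltr_ln ?posrE ?ltr0n ?mulr_gt0 ?ltr0n // -natrM ltr_nat.
rewrite lnM ?posrE ?ltr0n // in b.
rewrite /log2 ltr_pdivlMr // ltr_pdivrMr //; apply/andP; split; lra.
Qed.

Definition o30 : 'I_3 := @Ordinal 3 0 isT.
Definition o31 : 'I_3 := @Ordinal 3 1 isT.
Definition o32 : 'I_3 := @Ordinal 3 2 isT.

Lemma sum3 (F : 'I_3 -> R) : \sum_(i < 3) F i = F o30 + F o31 + F o32.
Proof.
rewrite !big_ord_recl big_ord0 addr0 addrA.
by congr (F _ + F _ + F _); apply: val_inj.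
Qed.

Lemma perm3 (sg : 'S_3) (P : nat -> nat -> nat -> Prop) :
  P 0 1 2 -> P 0 2 1 -> P 1 0 2 -> P 1 2 0 -> P 2 0 1 -> P 2 1 0 ->
  P (sg o30) (sg o31) (sg o32).
Proof.
move=> h1 h2 h3 h4 h5 h6.
have d01 : (sg o30 : nat) != sg o31 by rewrite (inj_eq val_inj) (inj_eq perm_inj).
have d02 : (sg o30 : nat) != sg o32 by rewrite (inj_eq val_inj) (inj_eq perm_inj).
have d12 : (sg o31 : nat) != sg o32 by rewrite (inj_eq val_inj) (inj_eq perm_inj).
move: (sg o30) (sg o31) (sg o32) d01 d02 d12.
by case=> [[|[|[|?]]] ?]; case=> [[|[|[|?]]] ?]; case=> [[|[|[|?]]] ?].
Qed.


Lemma tf n (sg : 'S_n.+1) r : top_feedback sg r = r ((sg^-1)%g ord0).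
Proof.
apply/existsP/idP => [[i /andP[/eqP hi ri]]|h].
  have e : sg i = ord0 by apply/val_inj.
  by rewrite -e permK.
by exists ((sg^-1)%g ord0); rewrite permKV eqxx h.
Qed.

Definition v3 (l : seq bool) : 'I_3 -> bool := fun i => nth false l i.
Definition a1N (b : bool) := if b then v3 [:: false; true; true] else v3 [:: true; false; false].
Definition a2N (b : bool) := if b then v3 [:: false; true; false] else v3 [:: true; false; true].

Lemma margN (sg : 'S_3) (H : bool -> R) :
  H (top_feedback sg (a1N true)) + H (top_feedback sg (a1N false)) =
  H (top_feedback sg (a2N true)) + H (top_feedback sg (a2N false)).
Proof.
rewrite !tf /=; case: ((sg^-1)%g ord0) => [[|[|[|?]]] ?] //=; by rewrite addrC.
Qed.

Lemma Zn_eq (r : 'I_3 -> bool) (z : R) s0 :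
  (forall s, DCG R s r <= z) -> DCG R s0 r = z -> Zn R r = z.
Proof.
move=> h1 h2; apply/le_anti/andP; split.
  apply: bigmax_le; [exact: h1 | move=> i _; exact: h1].
rewrite -h2; exact: le_bigmax.
Qed.

Lemma dist3 (sg : 'S_3) : [/\ (sg o30 : nat) != sg o31, (sg o30 : nat) != sg o32 & (sg o31 : nat) != sg o32].
Proof. by split; rewrite (inj_eq val_inj) (inj_eq perm_inj). Qed.

Ltac p3 sg :=
  move: (dist3 sg) (ltn_ord (sg o30)) (ltn_ord (sg o31)) (ltn_ord (sg o32));
  move: (nat_of_ord (sg o30)) (nat_of_ord (sg o31)) (nat_of_ord (sg o32));
  case=> [|[|[|?]]]; case=> [|[|[|?]]]; case=> [|[|[|?]]] => //=; case; do 3 (move=> /eqP; try done; move=> _); move=> _ _ _.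


Lemma Z011 : Zn R (v3 [:: false; true; true]) = 1 + (log2 (3%:R : R))^-1.
Proof.
have := l3; set L := log2 _ => hL.
have hy : 2^-1 < L^-1 < 1.
  have L0 : 0 < L by lra.
  apply/andP; split; last by rewrite invf_lt1 //; lra.
  by rewrite ltf_pV2 ?posrE //; lra.
apply: (Zn_eq (s0 := tperm o30 o32)).
  move=> s; rewrite /DCG sum3; p3 s; rewrite /= ?l2 ?l4 -/L; lra.
rewrite /DCG sum3 tpermL tpermR tpermD //= l2 l4 -/L; lra.
Qed.

Lemma hyL : 2^-1 < (log2 (3%:R : R))^-1 < 1.
Proof.
have := l3; set L := log2 _ => hL.
have L0 : 0 < L by lra.
apply/andP; split; last by rewrite invf_lt1 //; lra.
by rewrite ltf_pV2 ?posrE //; lra.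
Qed.

Lemma Z101 : Zn R (v3 [:: true; false; true]) = 1 + (log2 (3%:R : R))^-1.
Proof.
have := hyL; set L := log2 _ => hy.
apply: (Zn_eq (s0 := tperm o31 o32)).
  move=> s; rewrite /DCG sum3; p3 s; rewrite /= ?l2 ?l4 -/L; lra.
rewrite /DCG sum3 tpermL tpermR tpermD //= l2 l4 -/L; lra.
Qed.

Lemma Z100 : Zn R (v3 [:: true; false; false]) = 1.
Proof.
have := hyL; set L := log2 _ => hy.
apply: (Zn_eq (s0 := 1%g)).
  move=> s; rewrite /DCG sum3; p3 s; rewrite /= ?l2 ?l4 -/L; lra.
rewrite /DCG sum3 !perm1 /= l2 l4 -/L; lra.
Qed.

Lemma Z010 : Zn R (v3 [:: false; true; false]) = 1.
Proof.
have := hyL; set L := log2 _ => hy.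
apply: (Zn_eq (s0 := tperm o30 o31)).
  move=> s; rewrite /DCG sum3; p3 s; rewrite /= ?l2 ?l4 -/L; lra.
rewrite /DCG sum3 tpermL tpermR tpermD //= l2 l4 -/L; lra.
Qed.

Definition MN : R := (2 + (log2 (3%:R : R))^-1 + (1 + (log2 (3%:R : R))^-1)^-1) / 2.

Lemma hZ : let Y := (log2 (3%:R : R))^-1 in
  (1 + Y)^-1 * (1 + Y) = 1 /\ 2^-1 < (1 + Y)^-1 < 1.
Proof.
move=> Y; have := hyL; rewrite -/Y => hy.
have p : 0 < 1 + Y by lra.
split; first by rewrite mulVf // gt_eqF.
apply/andP; split.
  by rewrite ltf_pV2 ?posrE //; lra.
by rewrite invf_lt1 //; lra.
Qed.

Lemma boundN (sg : 'S_3) : gk (@NDCG R 3) a1N sg + gk (@NDCG R 3) a2N sg <= MN.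
Proof.
rewrite /gk /NDCG /MN /= Z011 Z100 Z010 Z101 /DCG !sum3.
p3 sg; rewrite ?l2 ?l4;
have := hyL; have := hZ; set Y := (log2 _)^-1; set Z := (1 + Y)^-1 => -[hz1 hz2] hy; rewrite -/Z in hz1 hz2; nra.
Qed.

Lemma gapN : 0 < gk (@NDCG R 3) a1N 1%g + gk (@NDCG R 3) a2N (tperm o30 o31) - MN.
Proof.
rewrite /gk /NDCG /MN /= Z011 Z100 Z010 Z101 /DCG !sum3 !perm1 !tpermL !tpermR !tpermD //=.
have := hyL; have := hZ; set Y := (log2 _)^-1; set Z := (1 + Y)^-1 => -[hz1 hz2] hy.
rewrite -/Z in hz1 hz2; rewrite ?l2 ?l4 -/Y -/Z; nra.
Qed.

Lemma norm1v3 l : Defs.norm1 (v3 l) = (nth false l 0 + nth false l 1 + nth false l 2)%N.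
Proof.
rewrite /Defs.norm1 cardsE -sum1_card big_mkcond !big_ord_recl big_ord0 /=.
rewrite !unfold_in /=; case: (nth false l 0); case: (nth false l 1); by case: (nth false l 2).
Qed.

Lemma n011 : Defs.norm1 (v3 [:: false; true; true]) = 2%N. Proof. by rewrite norm1v3. Qed.
Lemma n101 : Defs.norm1 (v3 [:: true; false; true]) = 2%N. Proof. by rewrite norm1v3. Qed.
Lemma n100 : Defs.norm1 (v3 [:: true; false; false]) = 1%N. Proof. by rewrite norm1v3. Qed.
Lemma n010 : Defs.norm1 (v3 [:: false; true; false]) = 1%N. Proof. by rewrite norm1v3. Qed.

Lemma sum3c (P : pred 'I_3) (F : 'I_3 -> R) :
  \sum_(i < 3 | P i) F i = (if P o30 then F o30 else 0) + (if P o31 then F o31 else 0) + (if P o32 then F o32 else 0).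
Proof. by rewrite big_mkcond sum3. Qed.

Lemma boundM (sg : 'S_3) : gk (@MAP R 3) a1N sg + gk (@MAP R 3) a2N sg <= 35 / 24.
Proof.
rewrite /gk /MAP /= n011 n101 n100 n010 !sum3 !sum3c /=.
rewrite /v3; p3 ((sg^-1)%g).
all: lra.
Qed.

Lemma gapM : 0 < gk (@MAP R 3) a1N 1%g + gk (@MAP R 3) a2N (tperm o30 o31) - 35 / 24.
Proof.
rewrite /gk /MAP /= n011 n101 n100 n010 !sum3 !sum3c /= invg1 tpermV !perm1.
rewrite !tpermL !tpermR !tpermD // /v3 /=; lra.
Qed.

Definition o40 : 'I_4 := @Ordinal 4 0 isT.
Definition o41 : 'I_4 := @Ordinal 4 1 isT.
Definition o42 : 'I_4 := @Ordinal 4 2 isT.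
Definition o43 : 'I_4 := @Ordinal 4 3 isT.

Lemma sum4 (F : 'I_4 -> R) : \sum_(i < 4) F i = F o40 + F o41 + F o42 + F o43.
Proof.
rewrite !big_ord_recl big_ord0 addr0 !addrA.
by congr (F _ + F _ + F _ + F _); apply: val_inj.
Qed.

Lemma dist4 (sg : 'S_4) : uniq [:: (sg o40 : nat); (sg o41 : nat); (sg o42 : nat); (sg o43 : nat)].
Proof.
have -> : [:: (sg o40 : nat); (sg o41 : nat); (sg o42 : nat); (sg o43 : nat)] =
  map (fun i => (sg i : nat)) [:: o40; o41; o42; o43] by [].
by rewrite map_inj_uniq // => i j /val_inj /perm_inj.
Qed.

Ltac p4 sg :=
  move: (dist4 sg) (ltn_ord (sg o40)) (ltn_ord (sg o41)) (ltn_ord (sg o42)) (ltn_ord (sg o43));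
  move: (nat_of_ord (sg o40)) (nat_of_ord (sg o41)) (nat_of_ord (sg o42)) (nat_of_ord (sg o43));
  case=> [|[|[|[|?]]]]; case=> [|[|[|[|?]]]]; case=> [|[|[|[|?]]]]; case=> [|[|[|[|?]]]] => //=.

Definition v4 (l : seq bool) : 'I_4 -> bool := fun i => nth false l i.
Definition a1A (b : bool) := if b then v4 [:: false; true; true; false] else v4 [:: true; false; false; false].
Definition a2A (b : bool) := if b then v4 [:: false; true; false; false] else v4 [:: true; false; true; false].

Lemma margA (sg : 'S_4) (H : bool -> R) :
  H (top_feedback sg (a1A true)) + H (top_feedback sg (a1A false)) =
  H (top_feedback sg (a2A true)) + H (top_feedback sg (a2A false)).
Proof.
rewrite !tf /=; case: ((sg^-1)%g ord0) => [[|[|[|[|?]]]] ?] //=; by rewrite addrC.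
Qed.

Lemma norm1v4 l : Defs.norm1 (v4 l) = (nth false l 0 + nth false l 1 + nth false l 2 + nth false l 3)%N.
Proof.
rewrite /Defs.norm1 cardsE -sum1_card big_mkcond !big_ord_recl big_ord0 /=.
rewrite !unfold_in /=; case: (nth false l 0); case: (nth false l 1); case: (nth false l 2); by case: (nth false l 3).
Qed.

Lemma m0110 : Defs.norm1 (v4 [:: false; true; true; false]) = 2%N. Proof. by rewrite norm1v4. Qed.
Lemma m1010 : Defs.norm1 (v4 [:: true; false; true; false]) = 2%N. Proof. by rewrite norm1v4. Qed.
Lemma m1000 : Defs.norm1 (v4 [:: true; false; false; false]) = 1%N. Proof. by rewrite norm1v4. Qed.
Lemma m0100 : Defs.norm1 (v4 [:: false; true; false; false]) = 1%N. Proof. by rewrite norm1v4. Qed.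

Lemma boundA (sg : 'S_4) : 13 / 24 <= gk (@AUC R 4) a1A sg + gk (@AUC R 4) a2A sg.
Proof.
rewrite /gk /AUC /= m0110 m1010 m1000 m0100 !sum4 /v4 /=.
have -> : (2 * (4 - 2))%N = 4%N by [].
have -> : (1 * (4 - 1))%N = 3%N by [].
p4 sg; move=> *; lra.
Qed.

Lemma gapA : 0 < 13 / 24 - gk (@AUC R 4) a1A 1%g - gk (@AUC R 4) a2A (tperm o40 o41).
Proof.
rewrite /gk /AUC /= m0110 m1010 m1000 m0100 !sum4 /v4 /= !perm1.
rewrite !tpermL !tpermR !tpermD //=.
have -> : (2 * (4 - 2))%N = 4%N by [].
have -> : (1 * (4 - 1))%N = 3%N by [].
lra.
Qed.
End Conc.

Unset Implicit Arguments.
Theorem theorem6 (R : realType) :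
  gain_regret_Omega_T (fun m => @NDCG R m) /\
  gain_regret_Omega_T (fun m => @MAP R m) /\
  loss_regret_Omega_T (fun m => @AUC R m).
Proof.
split; [|split].
- exists 3%N.
  exact: (gain_generic (@margN R) (@boundN R) (@gapN R)).
- exists 3%N.
  exact: (gain_generic (@margN R) (@boundM R) (@gapM R)).
- exists 4%N.
  exact: (loss_generic (@margA R) (@boundA R) (@gapA R)).
Qed.
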